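(* Let $L=2U\oplus A_2$. Then $\widetilde{\operatorname{O}}^+(L)$ acts transitively on the set of isotropic lines in $L\otimes\mathbb{Q}$ and transitively on the set of totally isotropic planes in $L\otimes\mathbb{Q}$. Thus the Tits' building $\mathcal{B}(\widetilde{\operatorname{O}}^+(L))$ consists of one line-node and one plane-node joined by one edge.
   Context: $U$ is the hyperbolic plane, $A_2$ the negative definite root lattice; $L$ has signature $(2,4)$. $\widetilde{\operatorname{O}}(L)$ is the kernel of $\operatorname{O}(L)\to\operatorname{O}(L^{\vee}/L)$; the real spinor norm of a product of reflections $\sigma_{w_1}\cdots\sigma_{w_m}$ is $\prod_i(-(w_i,w_i)/2)\in\mathbb{R}^*/(\mathbb{R}^* )^2$, and $\widetilde{\operatorname{O}}^+(L)$ is the subgroup of $\widetilde{\operatorname{O}}(L)$ of spinor norm $1$. For $G\subset\operatorname{O}^+(L\otimes\mathbb{Q})$, the Tits' building $\mathcal{B}(G)$ is the bipartite graph whose nodes are the $G$-orbits of isotropic lines and the $G$-orbits of totally isotropic planes in $L\otimes\mathbb{Q}$, with an edge between the orbit of a line $\ell$ and the orbit of a plane $\Pi$ iff $g\ell\subset\Pi$ for some $g\in G$. *)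

(* Defs.v *)
From HB Require Import structures.
From mathcomp Require Import all_boot all_order all_algebra.
From mathcomp Require Import reals.
Set Implicit Arguments. Unset Strict Implicit. Unset Printing Implicit Defensive.
Import GRing.Theory Num.Theory.
Local Open Scope ring_scope.

(* Gram matrix of L = U (+) U (+) A_2 (A_2 negative definite), basis
   e1,f1,e2,f2,a1,a2 :  U = [[0,1],[1,0]],  A_2(-1) = [[-2,1],[1,-2]]. *)
Definition gram_entry (i j : nat) : int :=
  match i, j with
  | 0, 1 | 1, 0 | 2, 3 | 3, 2 => 1
  | 4, 4 | 5, 5 => -2
  | 4, 5 | 5, 4 => 1
  | _, _ => 0
  end.

Definition GramL : 'M[int]_6 := \matrix_(i < 6, j < 6) gram_entry i j.

Definition GramF (F : fieldType) : 'M[F]_6 := map_mx intr GramL.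

Definition bform (F : fieldType) (x y : 'rV[F]_6) : F :=
  (x *m GramF F *m y^T) 0 0.

(* Elements of O(L): integer matrices acting on row vectors x |-> x *m g. *)
Definition in_OL (g : 'M[int]_6) : Prop :=
  g \in unitmx /\ g *m GramL *m g^T = GramL.

Definition gQ (g : 'M[int]_6) : 'M[rat]_6 := map_mx intr g.

Definition integral_row (u : 'rV[rat]_6) : Prop :=
  exists z : 'rV[int]_6, u = map_mx intr z.

Definition in_dual (u : 'rV[rat]_6) : Prop := integral_row (u *m GramF rat).

Definition discr_trivial (g : 'M[int]_6) : Prop :=
  forall u : 'rV[rat]_6, in_dual u -> integral_row (u *m gQ g - u).

(* reflection sigma_w(x) = x - 2 (x,w)/(w,w) w, as a matrix on row vectors *)
Definition reflmx (R : realType) (w : 'rV[R]_6) : 'M[R]_6 :=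
  1%:M - (2 / bform w w) *: (GramF R *m w^T *m w).

Definition spinor_norm_one (R : realType) (g : 'M[int]_6) : Prop :=
  exists s : seq 'rV[R]_6,
    all (fun w => bform w w != 0) s /\
    map_mx intr g = \prod_(w <- s) reflmx w /\
    0 < \prod_(w <- s) (- bform w w / 2).

Definition in_tildeOplus (R : realType) (g : 'M[int]_6) : Prop :=
  in_OL g /\ discr_trivial g /\ spinor_norm_one R g.

(* isotropic lines of L (x) Q, spanned by v *)
Definition isotropic_vec (v : 'rV[rat]_6) : Prop := v != 0 /\ bform v v = 0.

(* totally isotropic planes of L (x) Q, spanned by the rows of A *)
Definition tot_isotropic_plane (A : 'M[rat]_(2, 6)) : Prop :=
  \rank A = 2 /\ A *m GramF rat *m A^T = 0.

(* Main.v *)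
Require Import Defs.
From HB Require Import structures.
From mathcomp Require Import all_boot all_order all_algebra.
From mathcomp Require Import reals.
From mathcomp Require Import ring lra zify.
Set Implicit Arguments. Unset Strict Implicit. Unset Printing Implicit Defensive.
Import GRing.Theory Num.Theory.
Local Open Scope ring_scope.

Section Bil.
Variable K : comNzRingType.
Variable G : 'M[K]_6.
Definition bf (x y : 'rV[K]_6) : K := (x *m G *m y^T) 0 0.

Lemma bfDl x y z : bf (x + y) z = bf x z + bf y z.
Proof. by rewrite /bf !mulmxDl mxE. Qed.
Lemma bfDr x y z : bf z (x + y) = bf z x + bf z y.
Proof. by rewrite /bf linearD /= mulmxDr mxE. Qed.
Lemma bfZl a x z : bf (a *: x) z = a * bf x z.
Proof. by rewrite /bf -!scalemxAl mxE. Qed.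
Lemma bfZr a x z : bf z (a *: x) = a * bf z x.
Proof. by rewrite /bf linearZ /= -scalemxAr mxE. Qed.
Lemma bfNl x z : bf (- x) z = - bf x z.
Proof. by rewrite -scaleN1r bfZl mulN1r. Qed.
Lemma bfNr x z : bf z (- x) = - bf z x.
Proof. by rewrite -scaleN1r bfZr mulN1r. Qed.
Lemma bfBl x y z : bf (x - y) z = bf x z - bf y z.
Proof. by rewrite bfDl bfNl. Qed.
Lemma bfBr x y z : bf z (x - y) = bf z x - bf z y.
Proof. by rewrite bfDr bfNr. Qed.
Lemma bf0l z : bf 0 z = 0.
Proof. by rewrite /bf !mul0mx mxE. Qed.
Lemma bfsym : G^T = G -> forall x y, bf x y = bf y x.
Proof.
move=> sG x y; rewrite /bf.
have e1 : forall M : 'M[K]_1, M 0 0 = M^T 0 0 by move=> M; rewrite mxE.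
rewrite [RHS]e1.
by rewrite !trmx_mul trmxK sG mulmxA.
Qed.

Lemma actGE (x u w : 'rV[K]_6) : x *m (G *m u^T *m w) = bf x u *: w.
Proof.
rewrite !mulmxA /bf.
by rewrite [in LHS](mx11_scalar (x *m G *m u^T)) mul_scalar_mx.
Qed.

Lemma mx_ext (A B : 'M[K]_6) : (forall x : 'rV[K]_6, x *m A = x *m B) -> A = B.
Proof. by move=> h; apply/row_matrixP => i; rewrite !rowE h. Qed.

Lemma entry_delta (M : 'M[K]_6) i j :
  ((delta_mx 0 i : 'rV[K]_6) *m M *m (delta_mx 0 j : 'rV[K]_6)^T) 0 0 = M i j.
Proof. by rewrite -rowE trmx_delta -colE !mxE. Qed.

Lemma form_pres (g : 'M[K]_6) :
  (forall x y, bf (x *m g) (y *m g) = bf x y) -> g *m G *m g^T = G.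
Proof.
move=> h; apply/matrixP => i j.
have := h (delta_mx 0 i : 'rV[K]_6) (delta_mx 0 j : 'rV[K]_6); rewrite /bf.
rewrite !entry_delta => <-.
by rewrite -[LHS]entry_delta trmx_mul !mulmxA.
Qed.

Lemma form_pres_inv (g : 'M[K]_6) x y :
  g *m G *m g^T = G -> bf (x *m g) (y *m g) = bf x y.
Proof. move=> h; rewrite /bf trmx_mul; have -> : x *m g *m G *m (g^T *m y^T) = x *m (g *m G *m g^T) *m y^T by rewrite !mulmxA. by rewrite h. Qed.
End Bil.

Section Gen.
Variable K : comNzRingType.
Variable G : 'M[K]_6.
Lemma act11 (x u w : 'rV[K]_6) : x *m G *m u^T *m w = bf G x u *: w.
Proof. by rewrite [in LHS](mx11_scalar (x *m G *m u^T)) mul_scalar_mx. Qed.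

Definition Nmx (e c : 'rV[K]_6) (q : K) : 'M[K]_6 :=
  e^T *m c - c^T *m e - q *: (e^T *m e).
Definition Emx e c q : 'M[K]_6 := 1%:M + G *m Nmx e c q.
Definition Smx (r : 'rV[K]_6) : 'M[K]_6 := 1%:M + G *m (r^T *m r).

Lemma EmxE x e c q : x *m Emx e c q =
  x - bf G x c *: e + bf G x e *: c - (q * bf G x e) *: e.
Proof.
rewrite /Emx /Nmx mulmxDr mulmx1 (mulmxBr G) (mulmxBr G) (mulmxBr x) (mulmxBr x).
rewrite -(scalemxAr q G) -(scalemxAr q x) !mulmxA !act11.
by apply/rowP => i; rewrite !mxE; ring.
Qed.

Lemma SmxE x r : x *m Smx r = x + bf G x r *: r.
Proof. by rewrite /Smx mulmxDr mulmx1 !mulmxA act11. Qed.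

Hypothesis sG : G^T = G.
Ltac bfx := rewrite ?(bfDl, bfDr, bfBl, bfBr, bfZl, bfZr, bfNl, bfNr).

Lemma Emx_pres e c q x y : bf G e e = 0 -> bf G e c = 0 -> bf G c c = 2 * q ->
  bf G (x *m Emx e c q) (y *m Emx e c q) = bf G x y.
Proof.
move=> hee hec hcc; rewrite !EmxE; bfx.
rewrite ?(bfsym sG e x) ?(bfsym sG e y) ?(bfsym sG c x) ?(bfsym sG c y) ?(bfsym sG c e) ?(bfsym sG y x).
rewrite hee hec hcc; ring.
Qed.

Lemma Emx_inv e c q : bf G e e = 0 -> bf G e c = 0 -> bf G c c = 2 * q ->
  Emx e c q *m Emx e (- c) q = 1%:M.
Proof.
move=> hee hec hcc; apply: mx_ext => x; rewrite mulmxA !EmxE mulmx1; bfx.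
rewrite ?(bfsym sG c e) hee hec hcc.
by apply/rowP => i; rewrite !mxE; ring.
Qed.

Lemma Smx_pres r x y : bf G r r = -2 ->
  bf G (x *m Smx r) (y *m Smx r) = bf G x y.
Proof.
move=> hrr; rewrite !SmxE; bfx.
rewrite ?(bfsym sG r x) ?(bfsym sG r y) ?(bfsym sG y x) hrr; ring.
Qed.

Lemma Smx_inv r : bf G r r = -2 -> Smx r *m Smx r = 1%:M.
Proof.
move=> hrr; apply: mx_ext => x; rewrite mulmxA !SmxE mulmx1; bfx.
rewrite hrr; by apply/rowP => i; rewrite !mxE; ring.
Qed.

Lemma Emx_add e c1 c2 q1 q2 : bf G e e = 0 -> bf G e c1 = 0 -> bf G e c2 = 0 ->
  Emx e c1 q1 *m Emx e c2 q2 = Emx e (c1 + c2) (q1 + q2 + bf G c1 c2).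
Proof.
move=> hee h1 h2; apply: mx_ext => x; rewrite mulmxA !EmxE; bfx.
rewrite ?(bfsym sG c1 e) ?(bfsym sG c2 e) hee h1 h2.
by apply/rowP => i; rewrite !mxE; ring.
Qed.
End Gen.

Lemma GramL_sym : GramL^T = GramL.
Proof.
apply/matrixP => i j; rewrite !mxE.
by case: i j => [[|[|[|[|[|[|?]]]]]] ?] [[|[|[|[|[|[|?]]]]]] ?].
Qed.

Lemma GramF_sym (F : fieldType) : (GramF F)^T = GramF F.
Proof. by rewrite /GramF map_trmx GramL_sym. Qed.

Lemma bformE (F : fieldType) x y : bform x y = bf (GramF F) x y.
Proof. by []. Qed.

Lemma bf_map (F : fieldType) (x y : 'rV[int]_6) :
  bf (GramF F) (map_mx intr x) (map_mx intr y) = intr (bf GramL x y).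
Proof. by rewrite /bf /GramF map_trmx -!map_mxM mxE. Qed.

Lemma Emx_map (F : fieldType) e c q :
  map_mx (intr : int -> F) (Emx GramL e c q) =
  Emx (GramF F) (map_mx intr e) (map_mx intr c) (intr q).
Proof.
by rewrite /Emx /Nmx map_mxD map_mx1 map_mxM !map_mxB map_mxZ !map_mxM !map_trmx.
Qed.

Lemma Smx_map (F : fieldType) r :
  map_mx (intr : int -> F) (Smx GramL r) = Smx (GramF F) (map_mx intr r).
Proof. by rewrite /Smx map_mxD map_mx1 !map_mxM map_trmx. Qed.

Section Spin.
Variable R : realType.
Ltac bfx := rewrite ?(bfDl, bfDr, bfBl, bfBr, bfZl, bfZr, bfNl, bfNr).

Lemma reflE (w x : 'rV[R]_6) :
  x *m reflmx w = x - (2 / bf (GramF R) w w * bf (GramF R) x w) *: w.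
Proof.
rewrite /reflmx mulmxBr mulmx1 -scalemxAr !mulmxA act11 scalerA.
by rewrite bformE.
Qed.

Lemma Emx_refl (e c : 'rV[R]_6) q : q != 0 ->
  bf (GramF R) e e = 0 -> bf (GramF R) e c = 0 -> bf (GramF R) c c = 2 * q ->
  Emx (GramF R) e c q = reflmx c *m reflmx (c - q *: e).
Proof.
move=> q0 hee hec hcc; have sG := GramF_sym R.
apply: mx_ext => x; rewrite mulmxA !reflE EmxE; bfx.
rewrite ?(bfsym sG c e) ?(bfsym sG e x) ?(bfsym sG c x) hee hec hcc.
have h2 : (2 : R) != 0 by rewrite pnatr_eq0.
apply/rowP => i; rewrite !mxE; field.
by [].
Qed.

Lemma Smx_refl (r : 'rV[R]_6) : bf (GramF R) r r = -2 ->
  Smx (GramF R) r = reflmx r.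
Proof.
move=> hrr; apply: mx_ext => x; rewrite reflE SmxE hrr.
have h2 : (2 : R) != 0 by rewrite pnatr_eq0.
apply/rowP => i; rewrite !mxE; by field.
Qed.
End Spin.

Lemma gQM g1 g2 : gQ (g1 *m g2) = gQ g1 *m gQ g2.
Proof. by rewrite /gQ map_mxM. Qed.

Lemma integral_add u v : integral_row u -> integral_row v -> integral_row (u + v).
Proof. by move=> [z ->] [z' ->]; exists (z + z'); rewrite map_mxD. Qed.

Lemma integral_mul z g : integral_row (map_mx intr z *m gQ g).
Proof. by exists (z *m g); rewrite /gQ map_mxM. Qed.

Lemma discr_GN (N : 'M[int]_6) : discr_trivial (1%:M + GramL *m N).
Proof.
move=> u [z hz]; rewrite /gQ map_mxD map_mx1 map_mxM mulmxDr mulmx1 addrC addKr.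
by rewrite mulmxA -/(GramF rat) hz -map_mxM; exists (z *m N).
Qed.

Section Good.
Variable R : realType.

Lemma tO_mul g1 g2 : in_tildeOplus R g1 -> in_tildeOplus R g2 ->
  in_tildeOplus R (g1 *m g2).
Proof.
move=> [[u1 o1] [d1 [s1 [a1 [p1 n1]]]]] [[u2 o2] [d2 [s2 [a2 [p2 n2]]]]].
split; [split|split].
- by rewrite unitmx_mul u1 u2.
- rewrite trmx_mul (_ : g1 *m g2 *m GramL *m (g2^T *m g1^T) = g1 *m (g2 *m GramL *m g2^T) *m g1^T); first by rewrite o2 o1.
  by rewrite !mulmxA.
- move=> u hu; rewrite gQM.
  have -> : u *m (gQ g1 *m gQ g2) - u =
      (u *m gQ g1 - u) *m gQ g2 + (u *m gQ g2 - u).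
    by rewrite mulmxBl mulmxA addrA subrK.
  apply: integral_add; last exact: d2.
  by have [z ->] := d1 u hu; apply: integral_mul.
- exists (s1 ++ s2); split; first by rewrite all_cat a1 a2.
  split; first by rewrite map_mxM big_cat /= p1 p2.
  by rewrite big_cat /=; apply: mulr_gt0.
Qed.

Lemma tO_1 : in_tildeOplus R 1%:M.
Proof.
split; [split|split].
- exact: unitmx1.
- by rewrite mul1mx trmx1 mulmx1.
- move=> u _; rewrite /gQ map_mx1 mulmx1 subrr; exists 0; by rewrite map_mx0.
- exists [::]; split=> //; split; first by rewrite big_nil map_mx1.
  by rewrite big_nil ltr01.
Qed.

Definition Good (g : 'M[int]_6) := exists h,
  [/\ in_tildeOplus R g, in_tildeOplus R h, g *m h = 1%:M & h *m g = 1%:M].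

Lemma Good_mul g1 g2 : Good g1 -> Good g2 -> Good (g1 *m g2).
Proof.
move=> [h1 [t1 t1' e1 e1']] [h2 [t2 t2' e2 e2']].
exists (h2 *m h1); split; try exact: tO_mul.
- by rewrite mulmxA -(mulmxA g1) e2 mulmx1 e1.
- by rewrite mulmxA -(mulmxA h2) e1' mulmx1 e2'.
Qed.

Lemma Good_1 : Good 1%:M.
Proof. by exists 1%:M; split; rewrite ?mulmx1 //; apply: tO_1. Qed.

Lemma Good_inv g : Good g -> exists h, Good h /\ g *m h = 1%:M.
Proof.
move=> [h [t t' e e']]; exists h; split=> //; exists g; split=> //.
Qed.

Lemma Good_form g x y : Good g -> bf GramL (x *m g) (y *m g) = bf GramL x y.
Proof. by move=> [h [[[_ o] _] _ _ _]]; apply: form_pres_inv. Qed.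

End Good.
Section G2. Variable R : realType.
Lemma tO_E e c q : q != 0 ->
  bf GramL e e = 0 -> bf GramL e c = 0 -> bf GramL c c = 2 * q ->
  in_tildeOplus R (Emx GramL e c q).
Proof.
move=> q0 hee hec hcc; have sG := GramL_sym.
split; [split|split].
- have := Emx_inv sG hee hec hcc; by case/mulmx1_unit.
- apply: (@form_pres _ GramL (Emx GramL e c q)) => x y; exact: (Emx_pres GramL_sym x y hee hec hcc).
- exact: (discr_GN (Nmx e c q)).
- set eR := map_mx (intr : int -> R) e; set cR := map_mx (intr : int -> R) c.
  have hee' : bf (GramF R) eR eR = 0 by rewrite bf_map hee.
  have hec' : bf (GramF R) eR cR = 0 by rewrite bf_map hec.
  have hcc' : bf (GramF R) cR cR = 2 * intr q by rewrite bf_map hcc intrM.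
  have q0' : (intr q : R) != 0 by rewrite intr_eq0.
  have sGR := GramF_sym R.
  have hb : bf (GramF R) (cR - intr q *: eR) (cR - intr q *: eR) = 2 * intr q.
    rewrite ?(bfDl, bfDr, bfBl, bfBr, bfZl, bfZr, bfNl, bfNr).
    by rewrite (bfsym sGR cR eR) hee' hec' hcc'; ring.
  have h2 : (2 : R) != 0 by rewrite pnatr_eq0.
  exists [:: cR; cR - intr q *: eR]; split.
    have hc1 : bform cR cR = 2 * intr q := hcc'.
    have hc2 : bform (cR - intr q *: eR) (cR - intr q *: eR) = 2 * intr q := hb.
    by rewrite /= hc1 hc2 mulf_neq0.
  split.
    rewrite Emx_map (Emx_refl q0' hee' hec' hcc') !big_cons big_nil.
    by rewrite mulr1.
  have hc1 : bform cR cR = 2 * intr q := hcc'.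
  have hc2 : bform (cR - intr q *: eR) (cR - intr q *: eR) = 2 * intr q := hb.
  rewrite !big_cons big_nil hc1 hc2 mulr1.
  have -> : - (2 * (intr q : R)) / 2 = - intr q by field.
  by rewrite mulrNN -expr2 exprn_even_gt0 //= q0' orbT.
Qed.
End G2.

Definition mkv (a b c d e f : int) : 'rV[int]_6 :=
  \row_(i < 6) nth 0 [:: a; b; c; d; e; f] i.

Lemma bf_mkv x1 y1 x2 y2 a1 a2 x1' y1' x2' y2' b1 b2 :
  bf GramL (mkv x1 y1 x2 y2 a1 a2) (mkv x1' y1' x2' y2' b1 b2) =
  x1 * y1' + y1 * x1' + x2 * y2' + y2 * x2' - 2 * a1 * b1 + a1 * b2 + a2 * b1 - 2 * a2 * b2.
Proof.
rewrite /bf !mxE !big_ord_recr big_ord0 /= !mxE !big_ord_recr !big_ord0 /= !mxE /=.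
ring.
Qed.

Section Moves.
Variable R : realType.

Lemma tO_S r : bf GramL r r = -2 -> in_tildeOplus R (Smx GramL r).
Proof.
move=> hrr; have sG := GramL_sym.
split; [split|split].
- have := Smx_inv hrr; by case/mulmx1_unit.
- apply: (@form_pres _ GramL (Smx GramL r)) => x y; exact: (Smx_pres sG x y hrr).
- exact: (discr_GN (r^T *m r)).
- set rR := map_mx (intr : int -> R) r.
  have hrr' : bform rR rR = -2 by rewrite bformE bf_map hrr rmorphN.
  exists [:: rR]; split; first by rewrite /= hrr' oppr_eq0 pnatr_eq0.
  split; first by rewrite Smx_map (Smx_refl hrr') big_cons big_nil mulr1.
  rewrite big_cons big_nil hrr' mulr1 opprK.
  have h2 : (2 : R) != 0 by rewrite pnatr_eq0.
  by rewrite divff.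
Qed.

Lemma Good_S r : bf GramL r r = -2 -> Good R (Smx GramL r).
Proof.
move=> hrr; exists (Smx GramL r); split; try exact: tO_S;
  exact: (Smx_inv hrr).
Qed.

Lemma Good_E0 e c q : q != 0 ->
  bf GramL e e = 0 -> bf GramL e c = 0 -> bf GramL c c = 2 * q ->
  Good R (Emx GramL e c q).
Proof.
move=> q0 hee hec hcc.
have hec' : bf GramL e (- c) = 0 by rewrite bfNr hec oppr0.
have hcc' : bf GramL (- c) (- c) = 2 * q by rewrite bfNl bfNr opprK.
exists (Emx GramL e (- c) q); split.
- exact: tO_E.
- exact: tO_E.
- exact: (Emx_inv GramL_sym hee hec hcc).
- have := Emx_inv GramL_sym hee hec' hcc'; by rewrite opprK.
Qed.

Lemma Good_E e c q a :
  bf GramL e e = 0 -> bf GramL e c = 0 -> bf GramL c c = 2 * q ->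
  bf GramL e a = 0 -> bf GramL a a = -2 ->
  Good R (Emx GramL e c q).
Proof.
move=> hee hec hcc hea haa; have sG := GramL_sym.
have [q0|q0] := eqVneq q 0; last exact: Good_E0.
subst q.
have key : forall d, bf GramL e d = 0 -> bf GramL d d = -2 ->
    bf GramL c d != 1 -> Good R (Emx GramL e c 0).
  move=> d hed hdd hcd.
  have h1 : bf GramL e (c + d) = 0 by rewrite bfDr hec hed addr0.
  have h2 : bf GramL e (- d) = 0 by rewrite bfNr hed oppr0.
  have h1c : bf GramL (c + d) (c + d) = 2 * (bf GramL c d - 1).
    rewrite !(bfDl, bfDr) hcc hdd (bfsym sG d c); ring.
  have h2c : bf GramL (- d) (- d) = 2 * (-1) by rewrite bfNl bfNr opprK hdd; ring.
  have -> : Emx GramL e c 0 = Emx GramL e (c + d) (bf GramL c d - 1) *m Emx GramL e (- d) (-1).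
    rewrite (@Emx_add _ _ sG e (c + d) (- d) (bf GramL c d - 1) (-1) hee h1 h2) addrK; congr Emx.
    rewrite !(bfDl, bfNr) hdd; ring.
  apply: Good_mul; apply: Good_E0 => //.
    by rewrite subr_eq0.
have [h1|h1] := eqVneq (bf GramL c a) 1.
  apply: (key (- a)); rewrite ?bfNr ?bfNl ?opprK ?hea ?oppr0 //.
  by rewrite h1.
exact: (key a).
Qed.

Definition Reach (v w : 'rV[int]_6) := exists g, Good R g /\ v *m g = w.

Lemma Reach_refl v : Reach v v.
Proof. by exists 1%:M; split; [apply: Good_1 | rewrite mulmx1]. Qed.

Lemma Reach_trans u v w : Reach u v -> Reach v w -> Reach u w.
Proof.
move=> [g1 [G1 <-]] [g2 [G2 <-]]; exists (g1 *m g2); split.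
  exact: Good_mul.
by rewrite mulmxA.
Qed.

Lemma Reach_iso v w : Reach v w -> bf GramL w w = bf GramL v v.
Proof. by move=> [g [Gg <-]]; apply: (Good_form _ _ Gg). Qed.

Definition a1v := mkv 0 0 0 0 1 0.

Ltac mkvE := rewrite ?EmxE ?SmxE !bf_mkv; apply/rowP;
  case => [[|[|[|[|[|[|?]]]]]] ?]; rewrite !mxE //=; ring.

Lemma move1 x1 y1 x2 y2 a1 a2 s t c1 c2 : exists X,
  Reach (mkv x1 y1 x2 y2 a1 a2)
        (mkv X y1 (x2 + y1 * s) (y2 + y1 * t) (a1 + y1 * c1) (a2 + y1 * c2)).
Proof.
set q := s * t - (c1 * c1 - c1 * c2 + c2 * c2).
exists (x1 - (x2 * t + y2 * s - 2 * a1 * c1 + a1 * c2 + a2 * c1 - 2 * a2 * c2) - q * y1).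
exists (Emx GramL (mkv 1 0 0 0 0 0) (mkv 0 0 s t c1 c2) q); split.
  apply: (@Good_E _ _ _ a1v); rewrite /a1v !bf_mkv /q; ring.
mkvE.
Qed.

Lemma move2 x1 y1 x2 y2 a1 a2 :
  Reach (mkv x1 y1 x2 y2 a1 a2) (mkv y1 x1 x2 y2 a1 a2).
Proof.
exists (Smx GramL (mkv 1 (-1) 0 0 0 0)); split.
  by apply: Good_S; rewrite bf_mkv.
mkvE.
Qed.

Lemma move3 x1 y1 x2 y2 a1 a2 c1 c2 : exists X,
  Reach (mkv x1 y1 x2 y2 a1 a2)
        (mkv x1 y1 X y2 (a1 + y2 * c1) (a2 + y2 * c2)).
Proof.
set q := - (c1 * c1 - c1 * c2 + c2 * c2).
exists (x2 - (- 2 * a1 * c1 + a1 * c2 + a2 * c1 - 2 * a2 * c2) - q * y2).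
exists (Emx GramL (mkv 0 0 1 0 0 0) (mkv 0 0 0 0 c1 c2) q); split.
  apply: (@Good_E _ _ _ a1v); rewrite /a1v !bf_mkv /q; ring.
mkvE.
Qed.

Lemma move4 x1 y1 x2 y2 a1 a2 :
  Reach (mkv x1 y1 x2 y2 a1 a2) (mkv x1 y1 y2 x2 a1 a2).
Proof.
exists (Smx GramL (mkv 0 0 1 (-1) 0 0)); split.
  by apply: Good_S; rewrite bf_mkv.
mkvE.
Qed.

Lemma move5 x1 y1 x2 y2 a1 a2 t :
  Reach (mkv x1 y1 x2 y2 a1 a2) (mkv (x1 + x2 * t) y1 x2 (y2 - y1 * t) a1 a2).
Proof.
exists (Emx GramL (mkv 0 0 0 1 0 0) (mkv t 0 0 0 0 0) 0); split.
  apply: (@Good_E _ _ _ a1v); rewrite /a1v !bf_mkv; ring.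
mkvE.
Qed.

Lemma move6 x1 y1 x2 y2 a1 a2 t :
  Reach (mkv x1 y1 x2 y2 a1 a2) (mkv x1 (y1 - y2 * t) (x2 + x1 * t) y2 a1 a2).
Proof.
exists (Emx GramL (mkv 0 1 0 0 0 0) (mkv 0 0 t 0 0 0) 0); split.
  apply: (@Good_E _ _ _ a1v); rewrite /a1v !bf_mkv; ring.
mkvE.
Qed.
End Moves.
Lemma normA_bound (r4 r5 m : int) : 0 <= r4 -> r4 < m -> 0 <= r5 -> r5 < m ->
  0 <= r4 * r4 - r4 * r5 + r5 * r5 < m * m.
Proof.
move=> h1 h2 h3 h4; apply/andP; split; first nia.
have [h|h] := lerP r4 r5; nia.
Qed.
Lemma bnd (X y P N : int) : y != 0 -> 0 <= P -> P < `|y| * `|y| ->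
  0 <= N -> N < `|y| * `|y| -> X * y + P - N = 0 -> `|X| < `|y|.
Proof. move=> *; nia. Qed.
Lemma modz_fact (x y : int) : y != 0 -> 0 <= x + y * - (x %/ y)%Z /\ x + y * - (x %/ y)%Z < `|y|.
Proof.
move=> y0; have e : x + y * - (x %/ y)%Z = (x %% y)%Z by rewrite {1}(divz_eq x y); ring.
by rewrite e; split; [apply: modz_ge0 | apply: ltz_mod].
Qed.
Lemma normN0 (a1 a2 : int) : a1 * a1 - a1 * a2 + a2 * a2 = 0 -> a1 = 0 /\ a2 = 0.
Proof. move=> h; split; nia. Qed.

Section Alg.
Variable R : realType.

Ltac mkvE := rewrite ?EmxE ?SmxE !bf_mkv; apply/rowP;
  case => [[|[|[|[|[|[|?]]]]]] ?]; rewrite !mxE //=; ring.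

Definition ReachF (v w : 'rV[int]_6) := exists g, [/\ Good R g, v *m g = w &
  mkv 1 0 0 0 0 0 *m g = mkv 1 0 0 0 0 0].

Lemma ReachF_refl v : ReachF v v.
Proof. by exists 1%:M; split; [apply: Good_1 | rewrite mulmx1 | rewrite mulmx1]. Qed.

Lemma ReachF_trans u v w : ReachF u v -> ReachF v w -> ReachF u w.
Proof.
move=> [g1 [G1 e1 f1]] [g2 [G2 e2 f2]]; exists (g1 *m g2); split.
- exact: Good_mul.
- by rewrite mulmxA e1.
- by rewrite mulmxA f1.
Qed.

Lemma ReachF_Reach v w : ReachF v w -> Reach R v w.
Proof. by move=> [g [G1 e1 _]]; exists g. Qed.

Lemma Reach_eq u v w : v = w -> Reach R u v -> Reach R u w.
Proof. by move=> ->. Qed.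

Lemma move3F x1 y1 x2 y2 a1 a2 c1 c2 : exists X,
  ReachF (mkv x1 y1 x2 y2 a1 a2)
        (mkv x1 y1 X y2 (a1 + y2 * c1) (a2 + y2 * c2)).
Proof.
set q := - (c1 * c1 - c1 * c2 + c2 * c2).
exists (x2 - (- 2 * a1 * c1 + a1 * c2 + a2 * c1 - 2 * a2 * c2) - q * y2).
exists (Emx GramL (mkv 0 0 1 0 0 0) (mkv 0 0 0 0 c1 c2) q); split.
- apply: (@Good_E _ _ _ _ a1v); rewrite /a1v !bf_mkv /q; ring.
- mkvE.
- mkvE.
Qed.

Lemma move4F x1 y1 x2 y2 a1 a2 :
  ReachF (mkv x1 y1 x2 y2 a1 a2) (mkv x1 y1 y2 x2 a1 a2).
Proof.
exists (Smx GramL (mkv 0 0 1 (-1) 0 0)); split.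
- by apply: Good_S; rewrite bf_mkv.
- mkvE.
- mkvE.
Qed.

Lemma ReachF_iso v w : ReachF v w -> bf GramL w w = bf GramL v v.
Proof. by move=> /ReachF_Reach; apply: Reach_iso. Qed.

Lemma alg1 n : forall x1 y1 x2 y2 a1 a2, (absz y1 <= n)%N ->
  bf GramL (mkv x1 y1 x2 y2 a1 a2) (mkv x1 y1 x2 y2 a1 a2) = 0 ->
  exists x1' x2' y2' a1' a2',
    Reach R (mkv x1 y1 x2 y2 a1 a2) (mkv x1' 0 x2' y2' a1' a2').
Proof.
elim: n => [|n IH] x1 y1 x2 y2 a1 a2 hn hiso.
  have y0 : y1 = 0 by lia.
  by subst y1; exists x1, x2, y2, a1, a2; apply: Reach_refl.
have [y0|y0] := eqVneq y1 0.
  by subst y1; exists x1, x2, y2, a1, a2; apply: Reach_refl.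
have [X hX] := move1 R x1 y1 x2 y2 a1 a2 (- (x2 %/ y1)%Z) (- (y2 %/ y1)%Z)
  (- (a1 %/ y1)%Z) (- (a2 %/ y1)%Z).
have [m2 M2] := modz_fact x2 y0; have [m3 M3] := modz_fact y2 y0.
have [m4 M4] := modz_fact a1 y0; have [m5 M5] := modz_fact a2 y0.
move: (x2 + y1 * - (x2 %/ y1)%Z) (y2 + y1 * - (y2 %/ y1)%Z)
  (a1 + y1 * - (a1 %/ y1)%Z) (a2 + y1 * - (a2 %/ y1)%Z) m2 M2 m3 M3 m4 M4 m5 M5 hX
  => r2 r3 r4 r5 m2 M2 m3 M3 m4 M4 m5 M5 hX.
have hiso2 := Reach_iso hX; rewrite hiso !bf_mkv in hiso2.
have hN := normA_bound m4 M4 m5 M5.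
have hP : 0 <= r2 * r3 < `|y1| * `|y1| by apply/andP; split; nia.
have hb : `|X| < `|y1|.
  move/andP: hN => [hN1 hN2]; move/andP: hP => [hP1 hP2].
  apply: (bnd (P := r2 * r3) (N := r4 * r4 - r4 * r5 + r5 * r5)) => //; nia.
have hm := move2 R X y1 r2 r3 r4 r5.
have hiso3 := Reach_iso hm; rewrite !bf_mkv in hiso3.
have [x1' [x2' [y2' [a1' [a2' hR]]]]] := IH y1 X r2 r3 r4 r5 ltac:(lia)
  ltac:(rewrite bf_mkv; nia).
exists x1', x2', y2', a1', a2'.
exact: (Reach_trans hX (Reach_trans hm hR)).
Qed.

Lemma alg2 n : forall x1 x2 y2 a1 a2, (absz y2 <= n)%N ->
  bf GramL (mkv x1 0 x2 y2 a1 a2) (mkv x1 0 x2 y2 a1 a2) = 0 ->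
  exists x2', ReachF (mkv x1 0 x2 y2 a1 a2) (mkv x1 0 x2' 0 0 0).
Proof.
elim: n => [|n IH] x1 x2 y2 a1 a2 hn hiso.
  have y0 : y2 = 0 by lia.
  subst y2; rewrite bf_mkv in hiso.
  have [-> ->] : a1 = 0 /\ a2 = 0 by apply: normN0; nia.
  by exists x2; apply: ReachF_refl.
have [y0|y0] := eqVneq y2 0.
  subst y2; rewrite bf_mkv in hiso.
  have [-> ->] : a1 = 0 /\ a2 = 0 by apply: normN0; nia.
  by exists x2; apply: ReachF_refl.
have [X hX] := move3F x1 0 x2 y2 a1 a2 (- (a1 %/ y2)%Z) (- (a2 %/ y2)%Z).
have [m4 M4] := modz_fact a1 y0; have [m5 M5] := modz_fact a2 y0.
move: (a1 + y2 * - (a1 %/ y2)%Z) (a2 + y2 * - (a2 %/ y2)%Z) m4 M4 m5 M5 hX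
  => r4 r5 m4 M4 m5 M5 hX.
have hiso2 := ReachF_iso hX; rewrite hiso !bf_mkv in hiso2.
have hN := normA_bound m4 M4 m5 M5.
have hb : `|X| < `|y2|.
  move/andP: hN => [hN1 hN2].
  apply: (bnd (P := 0) (N := r4 * r4 - r4 * r5 + r5 * r5)) => //; nia.
have hm := move4F x1 0 X y2 r4 r5.
have [x2' hR] := IH x1 y2 X r4 r5 ltac:(lia) ltac:(rewrite bf_mkv; nia).
exists x2'.
exact: (ReachF_trans hX (ReachF_trans hm hR)).
Qed.

Lemma alg3 n : forall x1 x2, (absz x2 <= n)%N ->
  exists d, Reach R (mkv x1 0 x2 0 0 0) (mkv d 0 0 0 0 0).
Proof.
elim: n => [|n IH] x1 x2 hn.
  have y0 : x2 = 0 by lia.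
  by subst x2; exists x1; apply: Reach_refl.
have [y0|y0] := eqVneq x2 0.
  by subst x2; exists x1; apply: Reach_refl.
have h5 := move5 R x1 0 x2 0 0 0 (- (x1 %/ x2)%Z).
have [m M] := modz_fact x1 y0.
move: (x1 + x2 * - (x1 %/ x2)%Z) m M h5 => r m M h5.
rewrite mul0r subr0 in h5.
have [r0|r0] := eqVneq r 0.
  subst r; exists x2.
  apply: (Reach_trans h5); apply: (Reach_trans (move5 R 0 0 x2 0 0 0 1)).
  apply: Reach_eq; last exact: (move6 R (0 + x2 * 1) 0 x2 (0 - 0 * 1) 0 0 (-1)).
  by congr mkv; ring.
have rp : 0 < r by rewrite lt0r r0.
have h6 := move6 R r 0 x2 0 0 0 (- (x2 %/ r)%Z).
have [m' M'] := modz_fact x2 r0.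
move: (x2 + r * - (x2 %/ r)%Z) m' M' h6 => s m' M' h6.
rewrite mul0r subr0 in h6.
have [d hd] := IH r s ltac:(lia).
exists d; exact: (Reach_trans h5 (Reach_trans h6 hd)).
Qed.
End Alg.

Lemma coord (z : 'rV[int]_6) : exists a b c d e f, z = mkv a b c d e f.
Proof.
exists (z 0 (@Ordinal 6 0 isT)), (z 0 (@Ordinal 6 1 isT)), (z 0 (@Ordinal 6 2 isT)),
  (z 0 (@Ordinal 6 3 isT)), (z 0 (@Ordinal 6 4 isT)), (z 0 (@Ordinal 6 5 isT)).
apply/rowP; case => [[|[|[|[|[|[|?]]]]]] ?]; rewrite !mxE //=;
  by congr (z _ _); apply: val_inj.
Qed.

Lemma clear_den (v : 'rV[rat]_6) :
  exists (k : int) (z : 'rV[int]_6), k != 0 /\ map_mx intr z = (k%:~R : rat) *: v.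
Proof.
exists (\prod_(i < 6) denq (v 0 i)).
exists (\row_(i < 6) (numq (v 0 i) * \prod_(j < 6 | j != i) denq (v 0 j))).
split; first by apply/prodf_neq0 => i _; apply: denq_neq0.
apply/rowP => i; rewrite !mxE [X in _ = X%:~R * _](bigD1 i) //=.
rewrite !intrM numqE; ring.
Qed.

Definition e1i := mkv 1 0 0 0 0 0.
Definition e2i := mkv 0 0 1 0 0 0.
Definition e1Q : 'rV[rat]_6 := map_mx intr e1i.
Definition e2Q : 'rV[rat]_6 := map_mx intr e2i.

Lemma map_mkv (a b c d e f : int) :
  map_mx (intr : int -> rat) (mkv a b c d e f) =
  a%:~R *: e1Q + b%:~R *: map_mx intr (mkv 0 1 0 0 0 0) + c%:~R *: e2Q +
  d%:~R *: map_mx intr (mkv 0 0 0 1 0 0) + e%:~R *: map_mx intr (mkv 0 0 0 0 1 0) +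
  f%:~R *: map_mx intr (mkv 0 0 0 0 0 1).
Proof.
apply/rowP; case => [[|[|[|[|[|[|?]]]]]] ?]; rewrite !mxE //=; 
  rewrite ?mulr0 ?mulr1 ?addr0 ?add0r //.
Qed.

Section Main.
Variable R : realType.

Lemma gQ_form g x y : Good R g ->
  bf (GramF rat) (x *m gQ g) (y *m gQ g) = bf (GramF rat) x y.
Proof.
move=> [h [[[_ o] _] _ _ _]]; apply: form_pres_inv.
by rewrite /gQ /GramF map_trmx -!map_mxM o.
Qed.

Lemma gQ_inv g h : g *m h = 1%:M -> gQ g *m gQ h = 1%:M.
Proof. by move=> e; rewrite -gQM e /gQ map_mx1. Qed.

Lemma line_main v : isotropic_vec v -> exists g (c : rat),
  [/\ Good R g, c != 0 & v *m gQ g = c *: e1Q].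
Proof.
case=> v0 hv; have hv' : bf (GramF rat) v v = 0 := hv.
have [k [z [k0 hz]]] := clear_den v.
have zi : bf GramL z z = 0.
  apply: (@intr_inj rat); rewrite -bf_map hz bfZl bfZr hv' !mulr0.
  by rewrite rmorph0.
have [x1 [y1 [x2 [y2 [a1 [a2 ez]]]]]] := coord z.
rewrite ez in zi hz.
have [x1' [x2' [y2' [a1' [a2' h1]]]]] := alg1 R (leqnn (absz y1)) zi.
have zi2 := Reach_iso h1; rewrite zi in zi2.
have [x2'' h2] := alg2 R (leqnn (absz y2')) zi2.
have [d h3] := alg3 R x1' (leqnn (absz x2'')).
have [g [Gg eg]] := Reach_trans h1 (Reach_trans (ReachF_Reach h2) h3).
have d0 : d != 0.
  apply/eqP => d0; subst d.
  have [h [_ gh]] := Good_inv Gg.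
  have : mkv x1 y1 x2 y2 a1 a2 = 0.
    rewrite -[LHS]mulmx1 -gh mulmxA eg.
    have -> : mkv 0 0 0 0 0 0 = 0.
      by apply/rowP; case => [[|[|[|[|[|[|?]]]]]] ?]; rewrite !mxE.
    by rewrite mul0mx.
  move=> z0; move: hz; rewrite z0 map_mx0 => /esym /eqP.
  by rewrite scalemx_eq0 intr_eq0 (negbTE k0) (negbTE v0).
exists g, (d%:~R / k%:~R); split=> //.
  by rewrite mulf_neq0 ?invr_eq0 ?intr_eq0.
have kQ : (k%:~R : rat) != 0 by rewrite intr_eq0.
have -> : v = (k%:~R)^-1 *: map_mx intr (mkv x1 y1 x2 y2 a1 a2).
  by rewrite hz scalerA mulVf // scale1r.
rewrite -scalemxAl /gQ -map_mxM eg.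
have -> : map_mx (intr : int -> rat) (mkv d 0 0 0 0 0) = d%:~R *: e1Q.
  by apply/rowP; case => [[|[|[|[|[|[|?]]]]]] ?]; rewrite !mxE //= ?mulr1 ?mulr0.
by rewrite scalerA mulrC.
Qed.
End Main.

Lemma entry_form (M N : 'M[rat]_(2, 6)) (G : 'M[rat]_6) i j :
  (M *m G *m N^T) i j = bf G (row i M) (row j N).
Proof.
rewrite /bf !mxE; apply: eq_bigr => k _; rewrite !mxE; congr (_ * _).
by apply: eq_bigr => l _; rewrite !mxE.
Qed.

Lemma splitA (A : 'M[rat]_(2, 6)) : A = col_mx (row ord0 A) (row ord_max A).
Proof.
apply/matrixP => i j; rewrite mxE; case: splitP => k hk; rewrite !mxE;
  congr (A _ _); apply: val_inj => /=; rewrite hk; case: k {hk} => [[|?] ?] //.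
Qed.

Definition P0 := col_mx e1Q e2Q.

Lemma rank_small (x y w : 'rV[rat]_6) : (x <= w)%MS -> (y <= w)%MS ->
  (\rank (col_mx x y) <= 1)%N.
Proof.
move=> hx hy; apply: leq_trans (rank_leq_row w).
by apply: mxrankS; rewrite col_mx_sub hx hy.
Qed.

Lemma plane_eq (c a b : rat) : c != 0 -> b != 0 ->
  (col_mx (c *: e1Q) (a *: e1Q + b *: e2Q) :=: P0)%MS.
Proof.
move=> c0 b0; rewrite /P0; apply/eqmxP/andP; split.
  rewrite col_mx_sub; apply/andP; split.
    apply: scalemx_sub; rewrite -addsmxE; exact: addsmxSl.
  apply: addmx_sub; apply: scalemx_sub; rewrite -addsmxE.
    exact: addsmxSl.
  exact: addsmxSr.
rewrite col_mx_sub -!addsmxE; apply/andP; split.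
  rewrite [X in (X <= _)%MS](_ : e1Q = c^-1 *: (c *: e1Q)); last first.
    by rewrite scalerA mulVf // scale1r.
  by apply: scalemx_sub; apply: addsmxSl.
rewrite [X in (X <= _)%MS](_ : e2Q = b^-1 *: ((a *: e1Q + b *: e2Q) + (- a / c) *: (c *: e1Q))); last first.
  by rewrite (scalerA (- a / c)) divfK // scaleNr addrC addKr scalerA mulVf // scale1r.
apply: scalemx_sub; apply: addmx_sub; first exact: addsmxSr.
by apply: scalemx_sub; apply: addsmxSl.
Qed.

Section Plane.
Variable R : realType.

Lemma gQ_free g : Good R g -> row_free (gQ g).
Proof.
move=> [h [_ _ e _]]; rewrite row_free_unit.
by case: (mulmx1_unit (gQ_inv e)).
Qed.

Lemma plane_main A : tot_isotropic_plane A ->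
  exists g, Good R g /\ (A *m gQ g :=: P0)%MS.
Proof.
case=> rk hA.
set r0 := row ord0 A; set r1 := row ord_max A.
have eA : A = col_mx r0 r1 by apply: splitA.
have hbf : forall i j, bf (GramF rat) (row i A) (row j A) = 0.
  by move=> i j; rewrite -entry_form hA mxE.
have r0n : r0 != 0.
  apply/eqP => r00; move: rk; rewrite eA r00 => rk.
  have := rank_small (sub0mx 1 r1) (submx_refl r1); by rewrite rk.
have [g1 [c [G1 c0 e1]]] := line_main R (conj r0n (hbf ord0 ord0)).
set u := r1 *m gQ g1.
have ue : bf (GramF rat) u e1Q = 0.
  have := @gQ_form R g1 r1 r0 G1; rewrite -/u e1 hbf bfZr => /eqP.
  by rewrite mulf_eq0 (negbTE c0) => /eqP.
have uu : bf (GramF rat) u u = 0 by rewrite (@gQ_form R g1 r1 r1 G1) hbf.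
have [k [z [k0 hz]]] := clear_den u.
have [X [y1 [x2 [y2 [a1 [a2 ez]]]]]] := coord z.
rewrite ez in hz.
have y10 : y1 = 0.
  apply: (@intr_inj rat); rewrite rmorph0.
  have : bf (GramF rat) (map_mx intr (mkv X y1 x2 y2 a1 a2)) e1Q = 0.
    by rewrite hz bfZl ue mulr0.
  rewrite /e1Q bf_map bf_mkv => <-; congr intr; ring.
subst y1.
have zi : bf GramL (mkv X 0 x2 y2 a1 a2) (mkv X 0 x2 y2 a1 a2) = 0.
  apply: (@intr_inj rat); rewrite -bf_map hz bfZl bfZr uu !mulr0.
  by rewrite rmorph0.
have [x2' [g2 [G2 ez2 ee2]]] := alg2 R (leqnn (absz y2)) zi.
exists (g1 *m g2); split; first exact: Good_mul.
have kQ : (k%:~R : rat) != 0 by rewrite intr_eq0.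
have e1g2 : e1Q *m gQ g2 = e1Q by rewrite /e1Q /gQ -map_mxM ee2.
have eu : u *m gQ g2 = (X%:~R / k%:~R) *: e1Q + (x2'%:~R / k%:~R) *: e2Q.
  have -> : u = (k%:~R)^-1 *: map_mx intr (mkv X 0 x2 y2 a1 a2).
    by rewrite hz scalerA mulVf // scale1r.
  rewrite -scalemxAl /gQ -map_mxM ez2.
  apply/rowP; case => [[|[|[|[|[|[|?]]]]]] ?]; rewrite !mxE //=; ring.
have eAg : A *m gQ (g1 *m g2) =
    col_mx (c *: e1Q) ((X%:~R / k%:~R) *: e1Q + (x2'%:~R / k%:~R) *: e2Q).
  have h : forall M : 'M[rat]_6, A *m M = col_mx (r0 *m M) (r1 *m M).
    by move=> M; rewrite {1}eA; exact: (mul_col_mx r0 r1 M).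
  rewrite gQM mulmxA h.
  have h' : forall (x y : 'rV[rat]_6) (M : 'M[rat]_6), col_mx x y *m M = col_mx (x *m M) (y *m M).
    by move=> x y M; exact: (mul_col_mx x y M).
  by rewrite h' e1 -scalemxAl e1g2 -/u eu.
have x20 : (x2'%:~R / k%:~R : rat) != 0.
  apply/eqP => x0; move: eAg; rewrite x0 scale0r addr0 => eAg.
  have := mxrankMfree A (gQ_free (Good_mul G1 G2)).
  rewrite eAg rk => r2.
  have := rank_small (scalemx_sub c (submx_refl e1Q)) (scalemx_sub (X%:~R / k%:~R) (submx_refl e1Q)).
  by rewrite r2.
by rewrite eAg; apply: plane_eq.
Qed.
End Plane.

Lemma scal0 n : ((0 : rat)%:M : 'M_n) = 0.
Proof. by apply/matrixP => i j; rewrite !mxE mul0rn. Qed.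

Lemma dot11 : e1i *m e1i^T = 1%:M.
Proof. by apply/matrixP => i j; rewrite !ord1 !mxE !big_ord_recr big_ord0 /= !mxE. Qed.
Lemma dot12 : e1i *m e2i^T = 0.
Proof. by apply/matrixP => i j; rewrite !ord1 !mxE !big_ord_recr big_ord0 /= !mxE. Qed.
Lemma dot21 : e2i *m e1i^T = 0.
Proof. by apply/matrixP => i j; rewrite !ord1 !mxE !big_ord_recr big_ord0 /= !mxE. Qed.
Lemma dot22 : e2i *m e2i^T = 1%:M.
Proof. by apply/matrixP => i j; rewrite !ord1 !mxE !big_ord_recr big_ord0 /= !mxE. Qed.

Lemma dotQ (x y : 'rV[int]_6) :
  map_mx (intr : int -> rat) x *m (map_mx intr y)^T = map_mx intr (x *m y^T).
Proof. by rewrite map_mxM map_trmx. Qed.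

Lemma P0_free : row_free P0.
Proof.
apply/row_freeP; exists P0^T.
rewrite /P0 tr_col_mx mul_col_row /e1Q /e2Q !dotQ dot11 dot12 dot21 dot22.
rewrite !map_mx1 !map_mx0.
by rewrite [RHS](scalar_mx_block 1 1 (1 : rat)).
Qed.

Lemma P0_rank : \rank P0 = 2.
Proof. by have := P0_free; rewrite /row_free => /eqP. Qed.

Lemma mx11G (x y : 'rV[rat]_6) : x *m GramF rat *m y^T = (bf (GramF rat) x y)%:M.
Proof. exact: mx11_scalar. Qed.

Lemma P0_iso : P0 *m GramF rat *m P0^T = 0.
Proof.
rewrite /P0 mul_col_mx tr_col_mx mul_col_row !mx11G /e1Q /e2Q !bf_map.
have -> : bf GramL e1i e1i = 0 by rewrite bf_mkv.
have -> : bf GramL e1i e2i = 0 by rewrite bf_mkv.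
have -> : bf GramL e2i e1i = 0 by rewrite bf_mkv.
have -> : bf GramL e2i e2i = 0 by rewrite bf_mkv.
by rewrite ?mulr0z !scal0 block_mx0.
Qed.

Lemma e1Q_iso : isotropic_vec e1Q.
Proof.
split.
  apply/eqP => h; have := congr1 (fun M : 'rV[rat]_6 => M 0 0) h.
  by rewrite !mxE.
by rewrite bformE /e1Q bf_map bf_mkv.
Qed.

Lemma e1Q_sub : (e1Q <= P0)%MS.
Proof. by rewrite /P0 -addsmxE; exact: addsmxSl. Qed.

Theorem mainTheorem9 (R : realType) :
  (* transitivity on isotropic lines *)
  (forall v w : 'rV[rat]_6, isotropic_vec v -> isotropic_vec w ->
     exists g : 'M[int]_6, in_tildeOplus R g /\ (v *m gQ g == w)%MS) /\
  (* transitivity on totally isotropic planes *)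
  (forall A B : 'M[rat]_(2, 6), tot_isotropic_plane A -> tot_isotropic_plane B ->
     exists g : 'M[int]_6, in_tildeOplus R g /\ (A *m gQ g == B)%MS) /\
  (* the building is nonempty: one line-node, one plane-node, joined by an edge *)
  (exists (v : 'rV[rat]_6) (A : 'M[rat]_(2, 6)),
     isotropic_vec v /\ tot_isotropic_plane A /\ (v <= A)%MS).
Proof.
split; [|split].
- move=> v w hv hw.
  have [g1 [c1 [G1 c10 e1v]]] := line_main R hv.
  have [g2 [c2 [G2 c20 e2w]]] := line_main R hw.
  have [h [Gh e2h]] := Good_inv G2.
  exists (g1 *m h); split.
    by case: (Good_mul G1 Gh) => h' [].
  apply/eqmxP.
  have ew : w = c2 *: (e1Q *m gQ h).
    by rewrite scalemxAl -e2w -mulmxA -gQM e2h /gQ map_mx1 mulmx1.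
  rewrite gQM mulmxA e1v -scalemxAl ew.
  apply: eqmx_trans (eqmx_scale _ c10) _.
  exact: eqmx_sym (eqmx_scale _ c20).
- move=> A B hA hB.
  have [g1 [G1 eA]] := plane_main R hA.
  have [g2 [G2 eB]] := plane_main R hB.
  have [h [Gh e2h]] := Good_inv G2.
  exists (g1 *m h); split.
    by case: (Good_mul G1 Gh) => h' [].
  apply/eqmxP.
  have eB' : B = B *m gQ g2 *m gQ h.
    by rewrite -mulmxA -gQM e2h /gQ map_mx1 mulmx1.
  rewrite gQM mulmxA [X in (_ :=: X)%MS]eB'.
  apply: eqmx_trans (eqmxMr _ eA) _.
  exact: eqmx_sym (eqmxMr _ eB).
- exists e1Q, P0; split; first exact: e1Q_iso.
  split; last exact: e1Q_sub.
  by split; [exact: P0_rank | exact: P0_iso].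
Qed.
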